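(* Let $R$ and $T$ be finite disjoint sets (robots and tasks) with $|R\sqcup T|\ge 3$, and let $c:(R\sqcup T)\times(R\sqcup T)\to\mathbb{R}_+$ be a cost function satisfying (M1) $c(s_1,s_2)\ge 0$, (M3) $c(s_1,s_2)=c(s_2,s_1)$, and (M4) $c(s_1,s_3)\le c(s_1,s_2)+c(s_2,s_3)$ for all $s_1,s_2,s_3\in R\sqcup T$. Let $G$ be the robot-task graph of this instance. Then there exists a graph $G'$ with a pair-labelling $c':V(G')\times V(G')\to\mathbb{R}_+$ such that (1) $V(G')$ is a partition of $V(G)=R\sqcup T$; (2) $c'$ satisfies (M1) and (M2): $c'(X,Y)=0$ if and only if $X=Y$; (3) $C'(P')=C(P)$ for every robot-route $P$ of $G$, where $P'$ is obtained from $P=(v_0,\dots,v_n)$ by replacing each $v_i$ by the unique block $V_i\in V(G')$ with $v_i\in V_i$, and $C$, $C'$ are the route costs derived from $c$, $c'$ respectively. Further, $c'$ is metric (i.e. satisfies (M1)–(M4)) if and only if there exists $\lambda\in\mathbb{R}_+$ such that $c(t,t)=\lambda$ for all $t\in T$.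
   Context: $\mathbb{R}_+=\{x\in\mathbb{R}:x\ge0\}\cup\{\infty\}$. An MRTA instance consists of robots $R$, tasks $T$ (each with a position in a landscape $L\subseteq\mathbb{R}^d$) and a cost function $c$ on $(R\sqcup T)\times(R\sqcup T)$; $c(s,s)$ is an execution (or boot-up) cost and $c(s_1,s_2)$ for $s_1\ne s_2$ a traversal cost. The robot-task graph $G$ has vertex set $R\sqcup T$, edge set all 2-element subsets of $R\sqcup T$, and pair-labelling $c$. A route in a graph is a list $(v_0,\dots,v_n)$ of vertices with consecutive vertices adjacent. For a route $P=(v_0,\dots,v_n)$ and pair-labelling $c$, its cost is $C(P)=\sum_{i=0}^{n}c(v_i,v_i)+\sum_{i=0}^{n-1}c(v_i,v_{i+1})$ if $n\ge1$ and $C(P)=0$ otherwise. A robot-route is a route with $v_0\in R$ and $v_j\in T$ for all $j\ge1$. Condition (M2) for a function $c$ means: $c(s_1,s_2)=0$ if and only if $s_1=s_2$; $c$ is metric if it satisfies (M1)–(M4). *)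

(* Defs.v *)
From mathcomp Require Import all_boot all_order all_algebra.
From mathcomp Require Import reals.
From mathcomp Require Import constructive_ereal.
Set Implicit Arguments.
Unset Strict Implicit.
Unset Printing Implicit Defensive.
Import Order.TTheory GRing.Theory Num.Theory.
Local Open Scope ring_scope.
Local Open Scope ereal_scope.

Section MRTA.
Variable R : realType.

Definition M1 (X : Type) (D : X -> Prop) (c : X -> X -> \bar R) : Prop :=
  forall x y, D x -> D y -> 0 <= c x y.
Definition M2 (X : Type) (D : X -> Prop) (c : X -> X -> \bar R) : Prop :=
  forall x y, D x -> D y -> (c x y = 0 <-> x = y).
Definition M3 (X : Type) (D : X -> Prop) (c : X -> X -> \bar R) : Prop :=
  forall x y, D x -> D y -> c x y = c y x.
Definition M4 (X : Type) (D : X -> Prop) (c : X -> X -> \bar R) : Prop :=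
  forall x y z, D x -> D y -> D z -> c x z <= c x y + c y z.
Definition metric (X : Type) (D : X -> Prop) (c : X -> X -> \bar R) : Prop :=
  [/\ M1 D c, M2 D c, M3 D c & M4 D c].

Definition route_cost (X : Type) (c : X -> X -> \bar R) (s : seq X) : \bar R :=
  if (1 < size s)%N then
    \sum_(v <- s) c v v + \sum_(p <- zip s (behead s)) c p.1 p.2
  else 0.
End MRTA.

(* Robot-routes of the robot-task graph G on R ⊔ T (complete simple graph:
   adjacency = distinctness): v_0 is a robot, v_j (j >= 1) are tasks. *)
Definition robot_route (Rb Tk : finType) (s : seq (Rb + Tk)) : bool :=
  match s with
  | [::] => false
  | v0 :: vs => [&& is_inl v0, all (fun v => ~~ is_inl v) vs
                 & path (fun x y => x != y) v0 vs]
  end.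

(* Main.v *)
Require Import Defs.
From mathcomp Require Import all_boot all_order all_algebra.
From mathcomp Require Import reals.
From mathcomp Require Import constructive_ereal.
From Stdlib Require Import Classical.
Set Implicit Arguments.
Unset Strict Implicit.
Unset Printing Implicit Defensive.
Import Order.TTheory GRing.Theory Num.Theory.
Local Open Scope ring_scope.
Local Open Scope ereal_scope.

Lemma zip_map2 (A B : Type) (f : A -> B) (s t : seq A) :
  zip (map f s) (map f t) = map (fun p => (f p.1, f p.2)) (zip s t).
Proof. by elim: s t => [|a s IH] [|b t] //=; rewrite IH. Qed.

Section Pf.
Variable R : realType.
Variables Rb Tk : finType.
Notation V := (Rb + Tk)%type.
Variable c : V -> V -> \bar R.
Hypothesis hM1 : M1 (fun _ => True) c.
Hypothesis hM3 : M3 (fun _ => True) c.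
Hypothesis hM4 : M4 (fun _ => True) c.

Lemma c0 x y : 0 <= c x y. Proof. exact: hM1. Qed.
Lemma csym x y : c x y = c y x. Proof. exact: hM3. Qed.
Lemma ctri x y z : c x z <= c x y + c y z. Proof. exact: hM4. Qed.

Lemma cself x y : c x x <= c x y + c x y.
Proof. by rewrite {2}(csym x y); apply: ctri. Qed.

Lemma czero_self x y : c x y = 0 -> c x x = 0.
Proof.
move=> h; apply/eqP; rewrite eq_le c0 andbT.
by have := cself x y; rewrite h adde0.
Qed.

Lemma oo_split (a b d : \bar R) : 0 <= a -> 0 <= b -> d <= a + b -> d = +oo ->
  a = +oo \/ b = +oo.
Proof.
move=> ha hb hd hoo; rewrite hoo in hd; move: ha hb hd.
case: a => [a| |] //; case: b => [b| |] //; by [right|left].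
Qed.

Lemma cfin_self x y : c x y != +oo -> c x x != +oo.
Proof.
move=> h; apply/negP => /eqP hx.
by case: (oo_split (c0 x y) (c0 x y) (cself x y) hx) => /eqP; rewrite (negbTE h).
Qed.

Definition eqr : rel V := fun x y => (x == y) || (c x y == 0).

Lemma eqr_sym x y : eqr x y = eqr y x.
Proof. by rewrite /eqr eq_sym csym. Qed.

Lemma eqr_trans x y z : eqr x y -> eqr y z -> eqr x z.
Proof.
rewrite /eqr => /orP[/eqP-> //|/eqP h1] /orP[/eqP<-|/eqP h2]; first by rewrite h1 eqxx orbT.
apply/orP; right; rewrite eq_le c0 andbT.
by have := ctri x y z; rewrite h1 h2 adde0.
Qed.

Lemma eqr_equiv : equivalence_rel eqr.
Proof.
move=> x y z; split; first by rewrite /eqr eqxx.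
move=> hxy; apply/idP/idP => h.
  by apply: eqr_trans h; rewrite eqr_sym.
by apply: eqr_trans h.
Qed.

Lemma eqr_cases x x' : eqr x x' -> x = x' \/ [/\ c x x' = 0, c x x = 0 & c x' x' = 0].
Proof.
rewrite /eqr => /orP[/eqP->|/eqP h]; [by left|right; split=> //].
  exact: czero_self h.
by apply: (@czero_self x' x); rewrite csym.
Qed.

Definition A (x : V) := if x is inl _ then c x x else 0.
Definition B (x : V) := if x is inl _ then 0 else c x x.
Definition reach (x : V) := is_inl x || [exists r : Rb, c (inl r) x != +oo].
Definition Da x y := A x + c x y + B y.
Definition Ds lam x y := A x + c x y + A y + lam.

Lemma A0 x : 0 <= A x. Proof. by case: x => * /=; rewrite ?c0. Qed.
Lemma B0 x : 0 <= B x. Proof. by case: x => * /=; rewrite ?c0. Qed.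

Lemma Da0 x y : 0 <= Da x y.
Proof. by rewrite /Da !adde_ge0 ?A0 ?B0 ?c0. Qed.

Lemma Da_ge x y : c x y <= Da x y.
Proof. by rewrite /Da lee_paddr ?B0 // lee_paddl ?A0. Qed.

Lemma Ds0 lam x y : 0 <= lam -> 0 <= Ds lam x y.
Proof. by move=> hl; rewrite /Ds !adde_ge0 ?A0 ?c0. Qed.

Lemma Ds_ge lam x y : 0 <= lam -> c x y <= Ds lam x y.
Proof. by move=> hl; rewrite /Ds lee_paddr // lee_paddr ?A0 // lee_paddl ?A0. Qed.

Lemma inv_c x x' y : eqr x x' -> c x y = c x' y.
Proof.
move=> /eqr_cases [->//|[h _ _]]; apply/eqP; rewrite eq_le.
have := ctri x x' y; rewrite h add0e => ->.
by have := ctri x' x y; rewrite (csym x' x) h add0e.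
Qed.

Lemma inv_A x x' : eqr x x' -> A x = A x'.
Proof.
move=> /eqr_cases [->//|[_ h1 h2]].
by case: x h1 => a h1; case: x' h2 => b h2 //=; rewrite ?h1 ?h2.
Qed.

Lemma inv_B x x' : eqr x x' -> B x = B x'.
Proof.
move=> /eqr_cases [->//|[_ h1 h2]].
by case: x h1 => a h1; case: x' h2 => b h2 //=; rewrite ?h1 ?h2.
Qed.

Lemma inv_reach1 x x' : eqr x x' -> reach x -> reach x'.
Proof.
move=> /eqr_cases [->//|[h _ _]] /orP[|/existsP[r hr]].
  case: x h => // r h _; apply/orP; right; apply/existsP; exists r; by rewrite h.
apply/orP; right; apply/existsP; exists r.
apply/negP => /eqP hoo.
have := ctri (inl r) x x'; rewrite h adde0 hoo leye_eq => /eqP.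
by apply/eqP.
Qed.

Lemma inv_reach x x' : eqr x x' -> reach x = reach x'.
Proof.
move=> h; apply/idP/idP; first exact: inv_reach1.
by apply: inv_reach1; rewrite eqr_sym.
Qed.

Lemma reach_oo x y : reach x -> ~~ reach y -> c x y = +oo.
Proof.
move=> hx; rewrite /reach negb_or negb_exists => /andP[_ /forallP hy].
case/orP: hx => [|/existsP[r hr]].
  by case: x => // r _; move: (hy r); rewrite negbK => /eqP.
move: (hy r); rewrite negbK => /eqP hoo.
case: (oo_split (c0 (inl r) x) (c0 x y) (ctri (inl r) x y) hoo) => // /eqP.
by rewrite (negbTE hr).
Qed.


Lemma ge0_noo (e : \bar R) : 0 <= e -> e != -oo. Proof. by case: e. Qed.

Lemma sumDa x vs : all (fun v => ~~ is_inl v) vs ->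
  \sum_(p <- zip (x :: vs) vs) Da p.1 p.2 =
  (if vs is [::] then 0 else A x) + \sum_(v <- vs) c v v
    + \sum_(p <- zip (x :: vs) vs) c p.1 p.2.
Proof.
elim: vs x => [|y ws IH] x /=; first by rewrite !big_nil !adde0.
move=> /andP[hy hws]; rewrite !big_cons IH //.
have -> : (if ws is [::] then 0 else A y) = 0 by case: ws {IH hws}; case: y hy.
rewrite add0e /Da.
have -> : B y = c y y by case: y hy.
rewrite -!addeA; congr (_ + _).
rewrite addeCA; congr (_ + _).
by rewrite addeCA.
Qed.

Notation P := (equivalence_partition eqr [set: V]).

Lemma eqr_in : {in [set: V] & &, equivalence_rel eqr}.
Proof. by move=> x y z _ _ _; apply: eqr_equiv. Qed.

Lemma P_part : partition P [set: V].
Proof. exact: equivalence_partitionP eqr_in. Qed.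

Lemma P_triv : trivIset P.
Proof. by case/and3P: P_part. Qed.

Lemma P_cover x : x \in cover P.
Proof. by case/and3P: P_part => /eqP -> _ _; rewrite in_setT. Qed.

Lemma pblockE x y : (y \in pblock P x) = eqr x y.
Proof. exact: (pblock_equivalence_partition eqr_in (in_setT x) (in_setT y)). Qed.

Lemma pblock_eqE x y : (pblock P x == pblock P y) = eqr x y.
Proof. by rewrite eq_pblock ?P_triv ?P_cover // pblockE. Qed.

Lemma sumc'_Da (c' : {set V} -> {set V} -> \bar R) (hge : forall X Y, 0 <= c' X Y)
  (hD : forall x y, reach x -> ~~ is_inl y -> x != y ->
          c' (pblock P x) (pblock P y) = Da x y) x vs :
  all (fun v => ~~ is_inl v) vs -> path (fun a b => a != b) x vs -> reach x ->
  \sum_(p <- zip (x :: vs) vs) c' (pblock P p.1) (pblock P p.2) =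
  \sum_(p <- zip (x :: vs) vs) Da p.1 p.2.
Proof.
elim: vs x => [|y ws IH] x /=; first by rewrite !big_nil.
move=> /andP[hy hws] /andP[hxy hp] hx; rewrite !big_cons hD //.
case hry: (reach y); first by rewrite IH.
have hoo : Da x y = +oo.
  by have := Da_ge x y; rewrite (reach_oo hx (negbT hry)) leye_eq => /eqP.
rewrite hoo !addye //; apply: ge0_noo; apply: sume_ge0 => *; by rewrite ?Da0 ?hge.
Qed.

Lemma route_ok (c' : {set V} -> {set V} -> \bar R) (hz : forall X, c' X X = 0)
  (hge : forall X Y, 0 <= c' X Y)
  (hD : forall x y, reach x -> ~~ is_inl y -> x != y ->
          c' (pblock P x) (pblock P y) = Da x y) s :
  robot_route s -> route_cost c' (map (pblock P) s) = route_cost c s.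
Proof.
case: s => [|v0 vs] // /and3P[h0 hall hp].
rewrite /route_cost size_map; case: ifP => // hsz.
rewrite behead_map zip_map2 big_map big1 ?add0e; last by move=> *; exact: hz.
rewrite big_map /= (sumc'_Da hge hD) //; last by rewrite /reach h0.
rewrite sumDa // big_cons.
have -> : (if vs is [::] then 0 else A v0) = c v0 v0.
  by case: vs hsz {hall hp}; case: v0 h0.
by [].
Qed.


Variable x0 : V.
Definition rep (X : {set V}) := odflt x0 [pick z in X].

Lemma rep_eqr x : eqr x (rep (pblock P x)).
Proof.
rewrite /rep; case: pickP => [y hy|h] /=; first by rewrite -pblockE.
by move: (h x); rewrite /= mem_pblock P_cover.
Qed.

Lemma blockE X : X \in P -> X = pblock P (rep X).
Proof.
move=> hX; rewrite /rep; case: pickP => [y hy|h] /=.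
  by rewrite (def_pblock P_triv hX hy).
have : X = set0 by apply/setP => z; rewrite in_set0 h.
by move=> hX0; case/and3P: P_part => _ _; rewrite -hX0 hX.
Qed.

Lemma c_rep x y : c (rep (pblock P x)) (rep (pblock P y)) = c x y.
Proof.
by rewrite -(inv_c _ (rep_eqr x)) csym -(inv_c _ (rep_eqr y)) csym.
Qed.

Lemma A_rep x : A (rep (pblock P x)) = A x.
Proof. exact: esym (inv_A (rep_eqr x)). Qed.
Lemma B_rep x : B (rep (pblock P x)) = B x.
Proof. exact: esym (inv_B (rep_eqr x)). Qed.
Lemma reach_rep x : reach (rep (pblock P x)) = reach x.
Proof. exact: esym (inv_reach (rep_eqr x)). Qed.

Lemma Da_eqr x y : eqr x y -> x != y -> Da x y = 0.
Proof.
move=> /eqr_cases [->|[h hx hy]]; first by rewrite eqxx.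
move=> _; rewrite /Da h.
have -> : A x = 0 by case: x {h} hx => a //= ->.
have -> : B y = 0 by case: y {h} hy => a //= ->.
by rewrite !adde0.
Qed.

Definition cu lam (X Y : {set V}) :=
  if X == Y then 0 else Ds lam (rep X) (rep Y).

Definition F (X Y : {set V}) : \bar R :=
  if (enum_rank X < enum_rank Y)%N then (1%:R)%:E else (2%:R)%:E.

Definition cn (X Y : {set V}) :=
  if X == Y then 0 else if reach (rep X) then Da (rep X) (rep Y) else F X Y.

Lemma cu_P lam x y : cu lam (pblock P x) (pblock P y) = if eqr x y then 0 else Ds lam x y.
Proof. by rewrite /cu pblock_eqE /Ds !A_rep c_rep. Qed.

Lemma cn_P x y : cn (pblock P x) (pblock P y) =
  if eqr x y then 0 else if reach x then Da x y else F (pblock P x) (pblock P y).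
Proof. by rewrite /cn pblock_eqE reach_rep /Da !A_rep !B_rep c_rep. Qed.

Lemma F_pos X Y : 0 < F X Y.
Proof. by rewrite /F; case: ifP => _; rewrite lte_fin ltr0n. Qed.

Lemma F_fin X Y : F X Y != +oo.
Proof. by rewrite /F; case: ifP. Qed.

Lemma F_asym X Y : X != Y -> F X Y != F Y X.
Proof.
move=> hXY; rewrite /F.
case: (ltngtP (enum_rank X) (enum_rank Y)) => h.
- by rewrite eqe eqr_nat.
- by rewrite eqe eqr_nat.
- by move: hXY; rewrite -(enum_rankK X) -(enum_rankK Y) (val_inj h) eqxx.
Qed.

Lemma Ds_tri lam x y z : 0 <= lam -> Ds lam x z <= Ds lam x y + Ds lam y z.
Proof.
move=> hl; rewrite /Ds addeACA.
apply: leeD; last by apply: leeDl.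
apply: (@le_trans _ _ ((A x + c x y) + (c y z + A z))).
  rewrite !addeA -(addeA (A x) (c x y)).
  apply: leeD => //; apply: leeD => //; exact: ctri.
apply: leeD; first by apply: leeDl; exact: A0.
by rewrite -(addeA (A y)); apply: leeDr; exact: A0.
Qed.

Lemma asym_contra (a e b : \bar R) : 0 <= a -> 0 <= e -> e != +oo -> 0 <= b -> b != 0 ->
  a + e + b != 0 + e + 0.
Proof.
case: e => [e| |] //; case: a => [a| |] //; case: b => [b| |] //.
rewrite !lee_fin => ha he _ hb hb0; rewrite !add0e !adde0 -!EFinD eqe.
apply/negP => /eqP h.
have : b = 0%R by apply/eqP; rewrite eq_le hb andbT;
  rewrite -(lerD2l (a + e)%R) addr0 h lerDr.
by move=> hb'; rewrite hb' eqxx in hb0.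
Qed.


Lemma Pset X : X \in P -> exists x, X = pblock P x.
Proof. by move=> /blockE ->; eexists. Qed.

Lemma PmemP x : pblock P x \in P.
Proof. exact: pblock_mem (P_cover x). Qed.

Lemma eqr_zero x y : c x y = 0 -> eqr x y.
Proof. by move=> h; rewrite /eqr h eqxx orbT. Qed.

Lemma main_sec :
  exists (P0 : {set {set V}}) (c' : {set V} -> {set V} -> \bar R),
    [/\ partition P0 [set: V],
        M1 (fun X => X \in P0) c',
        M2 (fun X => X \in P0) c',
        (forall s : seq V, robot_route s ->
           route_cost c' (map (pblock P0) s) = route_cost c s)
      & (metric (fun X => X \in P0) c' <->
         exists lam : \bar R, 0 <= lam /\ forall t : Tk, c (inr t) (inr t) = lam)].
Proof.
case: (classic (exists lam : \bar R, 0 <= lam /\ forall t : Tk, c (inr t) (inr t) = lam))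
  => [[lam [hl hu]]|hnu].
- have hge X Y : 0 <= cu lam X Y by rewrite /cu; case: ifP => // _; exact: Ds0.
  have hm1 : M1 (fun X => X \in P) (cu lam) by move=> X Y _ _; exact: hge.
  have hm2 : M2 (fun X => X \in P) (cu lam).
    move=> X Y /Pset[x ->] /Pset[y ->]; split; last by move=> ->; rewrite /cu eqxx.
    rewrite cu_P; case: ifP => [h _|h hz]; first by apply/eqP; rewrite pblock_eqE.
    exfalso; have := Ds_ge x y hl; rewrite hz => hle.
    have : c x y = 0 by apply/eqP; rewrite eq_le hle c0.
    by move/eqr_zero; rewrite h.
  exists P, (cu lam); split => //.
  + exact: P_part.
  + apply: route_ok => //; first by move=> X; rewrite /cu eqxx.
    move=> x y _ hy hxy; rewrite cu_P; case: ifP => h; first by rewrite Da_eqr.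
    by rewrite /Ds /Da; case: y hy {h hxy} => // t _ /=; rewrite adde0 hu.
  + split => [_|_]; first by exists lam.
    split => //.
    * move=> X Y /Pset[x ->] /Pset[y ->]; rewrite !cu_P eqr_sym; case: ifP => // _.
      by rewrite /Ds csym (addeAC (A x)) (addeAC (A y)) (addeC (A x)).
    * move=> X Y Z /Pset[x ->] /Pset[y ->] /Pset[z ->].
      case hxy: (eqr x y).
        have -> : pblock P x = pblock P y by apply/eqP; rewrite pblock_eqE.
        by rewrite {2}/cu eqxx add0e.
      case hyz: (eqr y z).
        have -> : pblock P y = pblock P z by apply/eqP; rewrite pblock_eqE.
        by rewrite {3}/cu eqxx adde0.
      rewrite !cu_P hxy hyz; case: ifP => _; first by rewrite adde_ge0 ?Ds0.
      exact: Ds_tri.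
- have hge X Y : 0 <= cn X Y.
    rewrite /cn; case: ifP => // _; case: ifP => _; [exact: Da0 | exact: ltW (F_pos _ _)].
  have hm1 : M1 (fun X => X \in P) cn by move=> X Y _ _; exact: hge.
  have hm2 : M2 (fun X => X \in P) cn.
    move=> X Y /Pset[x ->] /Pset[y ->]; split; last by move=> ->; rewrite /cn eqxx.
    rewrite cn_P; case: ifP => [h _|h]; first by apply/eqP; rewrite pblock_eqE.
    case: ifP => _ hz; last by move: (F_pos (pblock P x) (pblock P y)); rewrite hz ltxx.
    exfalso; have := Da_ge x y; rewrite hz => hle.
    have : c x y = 0 by apply/eqP; rewrite eq_le hle c0.
    by move/eqr_zero; rewrite h.
  exists P, cn; split => //.
  + exact: P_part.
  + apply: route_ok => //; first by move=> X; rewrite /cn eqxx.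
    move=> x y hx hy hxy; rewrite cn_P; case: ifP => h; first by rewrite Da_eqr.
    by rewrite hx.
  + split => [hm|hex]; last by case: hnu.
    exfalso; case: hm => _ _ hM3' _.
    have hM3P x y : cn (pblock P x) (pblock P y) = cn (pblock P y) (pblock P x).
      exact: hM3' (PmemP x) (PmemP y).
    have [t1 ht1] : exists t1 : Tk, c (inr t1) (inr t1) != 0.
      apply: NNPP => hn; apply: hnu; exists 0; split => // t.
      by apply/eqP; apply/negPn/negP => h; apply: hn; exists t.
    have [t2 ht2] : exists t2 : Tk, c (inr t2) (inr t2) != c (inr t1) (inr t1).
      apply: NNPP => hn; apply: hnu; exists (c (inr t1) (inr t1)); split; first exact: c0.
      by move=> t; apply/eqP; apply/negPn/negP => h; apply: hn; exists t.
    have h12 : ~~ eqr (inr t1) (inr t2).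
      apply/negP => /eqr_cases [[e]|[_ h _]]; first by move: ht2; rewrite e eqxx.
      by move: ht1; rewrite h eqxx.
    case: (boolP [forall u : Tk, reach (inr u)]) => [/forallP hall|].
    * have := hall t1; rewrite /reach /= => /existsP [r hr].
      have hne : ~~ eqr (inl r) (inr t1).
        apply/negP => /eqr_cases [//|[h _ _]].
        by move: ht1; rewrite (@czero_self (inr t1) (inl r)) ?eqxx // csym.
      move: (hM3P (inl r) (inr t1)); rewrite !cn_P (negbTE hne) eqr_sym (negbTE hne).
      rewrite (hall t1) /reach /= /Da /= (csym (inr t1)) => /eqP.
      by apply/negP; apply: asym_contra; rewrite ?c0.
    * rewrite negb_forall => /existsP [u hu].
      have key y : ~~ eqr (inr u) y -> False.
        move=> h; move: (hM3P (inr u) y); rewrite !cn_P (negbTE h) eqr_sym (negbTE h).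
        rewrite (negbTE hu).
        have hPne : pblock P (inr u) != pblock P y by rewrite pblock_eqE.
        case hry: (reach y).
          have hoo : Da y (inr u) = +oo.
            by have := Da_ge y (inr u); rewrite (reach_oo hry hu) leye_eq => /eqP.
          by rewrite hoo => /eqP; apply/negP; apply: F_fin.
        by move=> /eqP; apply/negP; apply: F_asym.
      case h1: (eqr (inr u) (inr t1)).
        apply: (key (inr t2)); apply/negP => h2.
        by move: h12; rewrite (eqr_trans _ h2) // eqr_sym.
      by apply: (key (inr t1)); rewrite h1.
Qed.

End Pf.

Unset Implicit Arguments.

Theorem lemma2 (R : realType) (Rb Tk : finType)
  (c : Rb + Tk -> Rb + Tk -> \bar R)
  (hcard : (2 < #|{: Rb + Tk}|)%N)
  (hM1 : M1 (fun _ => True) c)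
  (hM3 : M3 (fun _ => True) c)
  (hM4 : M4 (fun _ => True) c) :
  exists (P : {set {set Rb + Tk}}) (c' : {set Rb + Tk} -> {set Rb + Tk} -> \bar R),
    [/\ partition P [set: Rb + Tk],
        M1 (fun X => X \in P) c',
        M2 (fun X => X \in P) c',
        (forall s : seq (Rb + Tk), robot_route s ->
           route_cost c' (map (pblock P) s) = route_cost c s)
      & (metric (fun X => X \in P) c' <->
         exists lam : \bar R, 0 <= lam /\ forall t : Tk, c (inr t) (inr t) = lam)].
Proof.
have : [set: Rb + Tk] != set0.
  by rewrite -card_gt0 cardsT; apply: leq_trans hcard.
case/set0Pn => x0 _.
exact: (main_sec hM1 hM3 hM4 x0).
Qed.
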